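(* Let $\mathbf{V}\in\mathbb{R}^{n\times(k+1)}$ have full column rank and let $e_1>0$ be the smallest eigenvalue of $\mathbf{V}^\top\mathbf{V}$. Suppose $\mathbf{W}\in\mathbb{R}^{k\times(k+1)}$ satisfies $$\max_{i\in[n]}\Big\{\min_{l\in[k]}\|\mathbf{V}_{i,:}-\mathbf{W}_{l,:}\|\Big\}=\epsilon.$$ Then $\epsilon\ge\sqrt{e_1}\,(3n(k+1)^2)^{-1}$.
   Context: $[n]=\{1,\dots,n\}$; $\|\cdot\|$ is the Euclidean norm; $\mathbf{V}_{i,:}$ denotes the $i$-th row of $\mathbf{V}$. *)

(* Defs.v *)
From HB Require Import structures.
From mathcomp Require Import all_boot all_order all_algebra.
From mathcomp Require Import all_reals.
Set Implicit Arguments. Unset Strict Implicit. Unset Printing Implicit Defensive.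
Import Order.TTheory GRing.Theory Num.Theory.
Local Open Scope ring_scope.

Definition enorm (R : realType) (m : nat) (v : 'rV[R]_m) : R :=
  Num.sqrt (\sum_(j < m) v 0 j ^+ 2).

(* Minimum / maximum of a (nonempty) finite family of reals indexed by 'I_m.
   (For m = 0 these default to 0; they are only used with m > 0.) *)
Definition fmin (R : realType) (m : nat) (f : 'I_m -> R) : R :=
  let s := [seq f l | l : 'I_m] in \big[Num.min/head 0 s]_(x <- s) x.
Definition fmax (R : realType) (m : nat) (f : 'I_m -> R) : R :=
  let s := [seq f l | l : 'I_m] in \big[Num.max/head 0 s]_(x <- s) x.

Definition maxmin_dist (R : realType) (n k d : nat)
    (V : 'M[R]_(n, d)) (W : 'M[R]_(k, d)) : R :=
  fmax (fun i : 'I_n => fmin (fun l : 'I_k => enorm (row i V - row l W))).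

(* Main.v *)
Require Import Defs.
From HB Require Import structures.
From mathcomp Require Import all_boot all_order all_algebra.
From mathcomp Require Import all_reals complex.
Import Order.TTheory GRing.Theory Num.Theory.
Local Open Scope ring_scope.
From mathcomp Require Import ring lra.

Section Ray.
Local Open Scope sesquilinear_scope.

Lemma rayleigh (R : realType) m (M : 'M[R]_m) (e : R) :
  M^T = M -> (forall a, eigenvalue M a -> e <= a) ->
  forall x : 'rV_m, e * (x *m x^T) 0 0 <= (x *m M *m x^T) 0 0.
Proof.
move=> Msym He x.
pose f := real_complex R.
have freal r : f r \is Num.real by apply/complex_realP; exists r.
have fconj r : (f r)^* = f r by rewrite conj_Creal.
set A := map_mx f M.
have Aherm : A \is hermsymmx.
  apply/is_hermitianmxP; rewrite expr0 scale1r.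
  apply/matrixP => i j; rewrite !mxE fconj -{1}Msym mxE //.
have /orthomx_spectralP Aeq := hermitian_normalmx Aherm.
set P := spectralmx A in Aeq; set d := spectral_diag A in Aeq.
have Pu : P \is unitarymx := spectral_unitarymx A.
have Punit : P \in unitmx := spectral_unit A.
have iP : invmx P = P ^t* := invmx_unitary Pu.
have dreal := hermitian_spectral_diag_real Aherm.
have deig j : f e <= d 0 j.
  have /complex_realP [k dk] : d 0 j \is Num.real by apply: (mxOverP dreal).
  have eA : eigenvalue A (d 0 j).
    apply/eigenvalueP; exists (row j P).
      have PA : P *m A = diag_mx d *m P.
        by rewrite [in LHS]Aeq !mulmxA mulmxV // mul1mx.
      by rewrite -row_mul PA row_mul row_diag_mx -scalemxAl -rowE.
    apply/eqP => r0; move/row_unitarymxP: Pu => /(_ j j).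
    by rewrite r0 dotmxE mul0mx mxE eqxx => /eqP; rewrite eq_sym oner_eq0.
  move: eA; rewrite eigenvalue_root_char /A -map_char_poly. rewrite [d 0 j]dk. idtac.
  rewrite fmorph_root -eigenvalue_root_char => /He; rewrite -lecR //.
rewrite -lecR rmorphM /= -/f.
set z := map_mx f x.
have zt : z ^t* = map_mx f x^T.
  by apply/matrixP => i j; rewrite !mxE fconj.
have -> : f ((x *m M *m x^T) 0 0) = (z *m A *m z ^t*) 0 0.
  by rewrite zt -!map_mxM [in RHS]mxE.
have -> : f ((x *m x^T) 0 0) = (z *m z ^t*) 0 0.
  by rewrite zt -!map_mxM [in RHS]mxE.
set y := z *m P ^t*.
have yt : y ^t* = P *m z ^t*.
  by rewrite /y trmx_mul map_mxM trmxCK.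
have -> : z *m z ^t* = y *m y ^t*.
  by rewrite yt mulmxA /y -(mulmxA z) -iP mulVmx // mulmx1.
have -> : z *m A *m z ^t* = y *m diag_mx d *m y ^t*.
  by rewrite yt {1}Aeq iP /y !mulmxA.
rewrite mul_mx_diag !mxE mulr_sumr; apply: ler_sum => j _; rewrite ![y _ _]mxE !mxE.
set u := \sum_(j0 < m) _. apply: le_trans (ler_wpM2r (mul_conjC_ge0 u) (deig j)) _. by rewrite mulrA [d 0 j * u]mulrC. Qed.
End Ray.


Lemma bigmin_prop (R : realType) (s : seq R) (x0 : R) :
  let r := \big[Num.min/x0]_(x <- s) x in
  r \in x0 :: s /\ (forall y, y \in s -> r <= y).
Proof.
elim: s => [|a s [IH1 IH2]] /=; first by rewrite big_nil mem_head.
rewrite big_cons; split.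
  case: (leP a (\big[Num.min/x0]_(x <- s) x)) => _.
  - by rewrite !inE eqxx orbT.
  - by move: IH1; rewrite !inE => /orP [->|->]; rewrite ?orbT.
move=> y; rewrite inE => /orP [/eqP ->|ys]; first by rewrite ge_min lexx.
by rewrite ge_min (IH2 _ ys) orbT.
Qed.

Lemma bigmax_ge (R : realType) (s : seq R) (x0 : R) y :
  y \in s -> y <= \big[Num.max/x0]_(x <- s) x.
Proof.
elim: s => [|a s IH] //=.
rewrite big_cons inE => /orP [/eqP ->|ys]; first by rewrite le_max lexx.
by rewrite le_max (IH ys) orbT.
Qed.

Lemma fmax_ge (R : realType) m (f : 'I_m -> R) i : f i <= fmax f.
Proof. by rewrite /fmax; apply: bigmax_ge; apply: image_f. Qed.

Lemma fmin_ex (R : realType) m (f : 'I_m -> R) : (0 < m)%N ->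
  exists l, fmin f = f l.
Proof.
move=> m0; rewrite /fmin.
set s := [seq f l | l : 'I_m].
have hs : head 0 s \in s.
  have ht : forall t : seq R, size t = m -> head 0 t \in t.
    by case=> [|a t] /= sz; [rewrite -sz in m0 | rewrite mem_head].
  by apply: ht; rewrite size_image card_ord.
have [H1 _] := @bigmin_prop _ s (head 0 s).
have : \big[Num.min/head 0 s]_(x <- s) x \in s.
  by move: H1; rewrite inE => /orP [/eqP ->|].
by move/imageP => [l _ ->]; exists l.
Qed.

Lemma cs (R : realType) m (a b : 'I_m -> R) :
  (\sum_j a j * b j) ^+ 2 <= (\sum_j a j ^+ 2) * (\sum_j b j ^+ 2).
Proof.
set A := \sum_j a j ^+ 2; set B := \sum_j b j ^+ 2; set S := \sum_j a j * b j.
have B0 : 0 <= B by apply: sumr_ge0 => j _; exact: sqr_ge0.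
move: B0; rewrite le_eqVlt => /orP [/eqP B0|Bpos].
  have bz j : b j = 0.
    move: B0 => /esym/eqP; rewrite /B psumr_eq0; last by move=> i _; exact: sqr_ge0.
    by move/allP/(_ j (mem_index_enum _)); rewrite sqrf_eq0 => /eqP.
  have -> : S = 0 by rewrite /S big1 // => j _; rewrite bz mulr0.
  by rewrite -B0 expr0n /= mulr0.
have H : 0 <= \sum_j (B * a j - S * b j) ^+ 2 by apply: sumr_ge0 => j _; exact: sqr_ge0.
have E : \sum_j (B * a j - S * b j) ^+ 2 = B * (A * B - S ^+ 2).
  rewrite (eq_bigr (fun j => B ^+ 2 * a j ^+ 2 - (2 * B * S) * (a j * b j) + S ^+ 2 * b j ^+ 2)); last by move=> j _; ring.
  rewrite big_split sumrB /= -!mulr_sumr -/A -/B -/S; ring.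
by move: H; rewrite E pmulr_rge0 // subr_ge0.
Qed.

Theorem corollary8 (R : realType) (n k : nat) (V : 'M[R]_(n, k.+1))
    (W : 'M[R]_(k, k.+1)) (e1 eps : R) :
  (0 < k)%N ->
  \rank V = k.+1 ->
  eigenvalue (V^T *m V) e1 ->
  (forall a, eigenvalue (V^T *m V) a -> e1 <= a) ->
  0 < e1 ->
  maxmin_dist V W = eps ->
  Num.sqrt e1 / (3 * n * k.+1 ^ 2)%:R <= eps.
Proof.
move=> k0 rV _ emin e1pos <-; clear eps.
set eps := maxmin_dist V W.
have n0 : (0 < n)%N by have := rank_leq_row V; rewrite rV; apply: leq_trans.
have hl : forall i : 'I_n, exists l : 'I_k, enorm (row i V - row l W) <= eps.
  move=> i; have [l hl] := @fmin_ex _ _ (fun l : 'I_k => enorm (row i V - row l W)) k0.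
  exists l; rewrite -hl /eps /maxmin_dist.
  exact: (@fmax_ge _ _ (fun i => fmin (fun l : 'I_k => enorm (row i V - row l W))) i).
pose l i := xchoose (hl i).
have lP i : enorm (row i V - row (l i) W) <= eps := xchooseP (hl i).
pose S : 'M[R]_(n, k) := \matrix_(i < n) (delta_mx 0 (l i) : 'rV_k).
pose U := S *m W.
have rowU i : row i U = row (l i) W by rewrite row_mul rowK -rowE.
have rU : (\rank U^T <= k)%N.
  by rewrite mxrank_tr (leq_trans (mxrankM_maxr _ _)) // rank_leq_row.
set K := kermx U^T.
have Kn0 : K != 0.
  by rewrite -mxrank_eq0 mxrank_ker subn_eq0 -ltnNge ltnS.
have [j xn0] : exists j, row j K != 0.
  case: (pickP (fun j => row j K != 0)) => [j hj|H]; first by exists j.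
  move: Kn0; rewrite (_ : K = 0) ?eqxx //.
  by apply/row_matrixP => j; rewrite row0; move: (H j) => /negbFE/eqP.
set x := row j K.
have xU : x *m U^T = 0 by rewrite -row_mul mulmx_ker row0.
set E := V - U.
have xV : x *m V^T = x *m E^T by rewrite /E linearB /= mulmxBr xU subr0.
have Msym : (V^T *m V)^T = V^T *m V by rewrite trmx_mul trmxK.
have Ray := @rayleigh _ _ _ _ Msym emin x.
set X := \sum_j0 x 0 j0 ^+ 2.
have xx : (x *m x^T) 0 0 = X by rewrite mxE; apply: eq_bigr => i _; rewrite [x^T _ _]mxE expr2.
have q : (x *m (V^T *m V) *m x^T) 0 0 = \sum_i ((x *m E^T) 0 i) ^+ 2.
  rewrite mulmxA -mulmxA (_ : V *m x^T = (x *m V^T)^T); last by rewrite trmx_mul trmxK.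
  by rewrite xV mxE; apply: eq_bigr => i _; rewrite [(x *m E^T)^T _ _]mxE expr2.
have Ei i : \sum_j0 E i j0 ^+ 2 <= eps ^+ 2.
  have := lP i; rewrite /enorm.
  have -> : \sum_(j0 < k.+1) (row i V - row (l i) W) 0 j0 ^+ 2 = \sum_j0 E i j0 ^+ 2.
    by apply: eq_bigr => j0 _; rewrite -rowU !mxE.
  move=> h; have s0 := sqrtr_ge0 (\sum_j0 E i j0 ^+ 2).
  have := ler_pM s0 s0 h h; rewrite -!expr2 sqr_sqrtr //.
  by apply: sumr_ge0 => j0 _; exact: sqr_ge0.
have eps0 : 0 <= eps := le_trans (sqrtr_ge0 _) (lP (Ordinal n0)).
have X0 : 0 <= X by apply: sumr_ge0 => j0 _; exact: sqr_ge0.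
have csi i : ((x *m E^T) 0 i) ^+ 2 <= X * eps ^+ 2.
  have -> : (x *m E^T) 0 i = \sum_j0 x 0 j0 * E i j0.
    by rewrite mxE; apply: eq_bigr => j0 _; rewrite [E^T _ _]mxE.
  apply: le_trans (@cs _ _ (fun j0 => x 0 j0) (fun j0 => E i j0)) _.
  by rewrite -/X; exact: (ler_wpM2l X0 (Ei i)).
have Xpos : 0 < X.
  rewrite lt_def X0 andbT psumr_eq0; last by move=> j0 _; exact: sqr_ge0.
  apply: contra xn0 => /allP H; apply/eqP/rowP => j0; rewrite [RHS]mxE.
  by move: (H j0 (mem_index_enum _)) => /=; rewrite sqrf_eq0 => /eqP.
have key : e1 <= n%:R * eps ^+ 2.
  have h : e1 * X <= X * eps ^+ 2 *+ n.
    rewrite -xx; apply: le_trans Ray _; rewrite q.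
    rewrite -[n in _ *+ n]card_ord -sumr_const; apply: ler_sum => i _; rewrite xx; exact: csi.
  rewrite -(ler_pM2r Xpos); apply: (le_trans h).
  have -> : X * eps ^+ 2 *+ n = n%:R * eps ^+ 2 * X by rewrite -mulr_natl; ring.
  done.
have N0 : (0 : R) < (3 * n * k.+1 ^ 2)%:R.
  by rewrite ltr0n !muln_gt0 n0.
rewrite ler_pdivrMr //.
apply: (le_trans (y := n%:R * eps)).
  have ne0 : 0 <= n%:R * eps by rewrite mulr_ge0.
  rewrite -(ger0_norm ne0) -sqrtr_sqr ler_sqrt; last by rewrite sqr_ge0.
  apply: le_trans key _; rewrite exprMn ler_wpM2r ?sqr_ge0 //.
  by rewrite -natrX ler_nat expnS expn1 leq_pmull.
rewrite mulrC ler_wpM2l // ler_nat.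
by rewrite mulnAC leq_pmull // muln_gt0 expn_gt0.
Qed.
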